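(* Let $K\subset S^3$ be a knot and $C_0=CFK^-(K)$, viewed as a $(\mathbb{Z},U)$-filtered complex filtered by the Alexander grading $A$. Choose a horizontally simplified basis $\{x_1,\dots,x_N,y_1,\dots,y_N,z\}$ of $C_0$ over $\mathbb{F}[U]$. The $\mathbb{F}$-basis of $C_0$ then consists of the homogeneous elements $U^m w$ with $m\ge 0$ and $w$ in this basis; in particular $\partial_H(y_1)=U^{r_1}x_1$ with $r_1>0$. Define the following objects. - Let $h_1:C_0\to C_0$ be the $\mathbb{F}$-linear map with $h_1(U^{r_1+n}x_1)=U^ny_1$ for all $n\ge 0$, and $h_1=0$ on all other homogeneous basis elements. - Let $C_1$ be the $\mathbb{F}$-span of all homogeneous basis elements except $U^{r_1+n}x_1$ and $U^ny_1$ ($n\ge0$), with projection $\pi:C_0\to C_1$ and inclusion $\iota:C_1\to C_0$. - Set $\partial_1=\pi\circ(\partial+\partial h_1\partial)\circ\iota$, $U_1=\pi\circ(U+\partial h_1U)\circ\iota$, and $A_1=A\circ\iota$. Then $(C_1,\partial_1,A_1,U_1)$ is a $(\mathbb{Z},U)$-filtered chain deformation retract of $C_0$, via the maps $f_1=\pi\circ(I+\partial h_1)$ and $g_1=(I+h_1\partial)\circ\iota$.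
   Context: Coefficients are in $\mathbb{F}=\mathbb{Z}/2$. $CFK^-(K)$ is the Ozsváth–Szabó knot Floer complex. It is freely generated over $\mathbb{F}[U]$ by finitely many homogeneous generators and carries an Alexander filtration with $A(U^nx)=A(x)-n$ and $A(\sum_i y_i)=\max_i A(y_i)$ for homogeneous $y_i$. It also carries a Maslov grading, lowered by $1$ by $\partial$ and by $2$ by $U$. For a homogeneous element $w$, $\partial_H(w)$ (the horizontal differential) is the sum of the terms of $\partial w$ whose Alexander grading equals $A(w)$. A basis $\{x_i,y_i,z\}$ over $\mathbb{F}[U]$ is horizontally simplified if $\partial_H(y_i)=U^{r_i}x_i$ for some $r_i>0$ and $\partial_H(x_i)=\partial_H(z)=0$. A $\mathbb{Z}$-filtration is a function $F$ with $F(x+y)\le\max(F(x),F(y))$, $F(\partial x)\le F(x)$, and $F^{-1}(-\infty)=\{0\}$. A $(\mathbb{Z},U)$-filtered complex is a filtered complex with a specified filtered chain map $U$. $C'$ is a $(\mathbb{Z},U)$-filtered chain deformation retract of $C$ if there are filtered chain maps $f:C\to C'$ and $g:C'\to C$ satisfying: - $fg=I_{C'}$; - $gf=I+\partial h+h\partial$ for a filtered map $h$; - $fU\sim U'f$ and $gU'\sim Ug$, where $\sim$ denotes filtered chain homotopy. *)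

(* Defs.v *)
From HB Require Import structures.
From mathcomp Require Import all_boot all_order all_algebra.
Set Implicit Arguments. Unset Strict Implicit. Unset Printing Implicit Defensive.
Import Order.TTheory GRing.Theory Num.Theory.
Local Open Scope ring_scope.

(* Filtration levels: [None] stands for -infinity.                     *)
Definition ole (a b : option int) : bool :=
  match a, b with
  | None, _ => true
  | Some _, None => false
  | Some x, Some y => (x <= y)%R
  end.

Definition omax (a b : option int) : option int :=
  match a, b with
  | None, _ => b
  | _, None => a
  | Some x, Some y => Some (Order.max x y)
  end.

(* map is the same as an additive map.                                 *)
Section Generic.
Variables (T T' : zmodType).

Definition additive_map (f : T -> T') := forall x y, f (x + y) = f x + f y.

Definition is_filtration (d : T -> T) (F : T -> option int) : Prop :=
  [/\ forall x y, ole (F (x + y)) (omax (F x) (F y)),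
      forall x, ole (F (d x)) (F x)
    & forall x, F x = None <-> x = 0].

Definition filtered_map (F : T -> option int) (F' : T' -> option int)
  (f : T -> T') : Prop := forall x, ole (F' (f x)) (F x).

Definition filtered_chain_map (d : T -> T) (F : T -> option int)
  (d' : T' -> T') (F' : T' -> option int) (f : T -> T') : Prop :=
  [/\ additive_map f, filtered_map F F' f & forall x, f (d x) = d' (f x)].

(* filtered chain homotopy between phi and psi (signs irrelevant in char 2) *)
Definition filtered_homotopic (d : T -> T) (F : T -> option int)
  (d' : T' -> T') (F' : T' -> option int) (phi psi : T -> T') : Prop :=
  exists H : T -> T', [/\ additive_map H, filtered_map F F' H &
     forall x, phi x = psi x + d' (H x) + H (d x)].
End Generic.

Definition ZU_filtered_complex (T : zmodType) (d : T -> T) (U : T -> T)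
  (F : T -> option int) : Prop :=
  [/\ additive_map d, forall x, d (d x) = 0, is_filtration d F
    & filtered_chain_map d F d F U].

Definition ZU_deformation_retract (T T' : zmodType)
  (d : T -> T) (U : T -> T) (F : T -> option int)
  (d' : T' -> T') (U' : T' -> T') (F' : T' -> option int)
  (f : T -> T') (g : T' -> T) : Prop :=
  ZU_filtered_complex d U F /\ ZU_filtered_complex d' U' F' /\
  filtered_chain_map d F d' F' f /\ filtered_chain_map d' F' d F g /\
  (forall x, f (g x) = x) /\
  (exists h : T -> T, [/\ additive_map h, filtered_map F F h &
          forall x, g (f x) = x + d (h x) + h (d x)]) /\
  filtered_homotopic d F d' F' (fun x => f (U x)) (fun x => U' (f x)) /\
  filtered_homotopic d' F' d F (fun x => g (U' x)) (fun x => U (g x)).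

Definition gen (N : nat) : finType := (('I_N + 'I_N) + unit)%type.
Definition gx {N} (i : 'I_N) : gen N := inl (inl i).
Definition gy {N} (i : 'I_N) : gen N := inl (inr i).
Definition gz {N} : gen N := inr tt.

(* F = Z/2; F[U] = {poly 'F_2} with U = 'X.  An element of C0 is the   *)
(* family of its coordinates in F[U] on the generators.                *)
Definition C0 (N : nat) : zmodType := {ffun gen N -> {poly 'F_2}}.

Definition genel {N} (w : gen N) : C0 N := [ffun v => if v == w then 1 else 0].

Definition Umul {N} (x : C0 N) : C0 N := [ffun v => 'X * x v].

(* the F[U]-linear differential with matrix D: d(w) = sum_v D w v . v *)
Definition dmat {N} (D : gen N -> gen N -> {poly 'F_2}) (x : C0 N) : C0 N :=
  [ffun v => \sum_(w : gen N) x w * D w v].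

(* Alexander grading: A(U^m w) = Ag w - m, A(sum) = max, A(0) = -oo. *)
Definition Alex {N} (Ag : gen N -> int) (x : C0 N) : option int :=
  \big[omax/None]_(w : gen N)
     \big[omax/None]_(m < size (x w) | (x w)`_m != 0) Some (Ag w - (m : nat)%:Z).

(* Maslov grading of the homogeneous element U^m w is Mg w - 2m; the
   differential lowers it by one: every term U^m v of d(w) has Maslov
   grading Mg w - 1. *)
Definition d_lowers_maslov {N} (D : gen N -> gen N -> {poly 'F_2})
  (Mg : gen N -> int) : Prop :=
  forall w v (m : nat), (D w v)`_m != 0 -> Mg v - 2 * (m : int) = Mg w - 1.

Definition dH {N} (D : gen N -> gen N -> {poly 'F_2}) (Ag : gen N -> int)
  (w : gen N) : C0 N :=
  [ffun v => \sum_(m < size (dmat D (genel w) v) | Ag v - (m : nat)%:Z == Ag w)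
               ((dmat D (genel w) v)`_m *: 'X^m)].

Definition horizontally_simplified {N} (D : gen N -> gen N -> {poly 'F_2})
  (Ag : gen N -> int) (r : 'I_N -> nat) : Prop :=
  [/\ forall i, (0 < r i)%N /\ dH D Ag (gy i) = [ffun v => 'X^(r i) * genel (gx i) v],
      forall i, dH D Ag (gx i) = 0
    & dH D Ag gz = 0].

Section Cancel.
Variables (N : nat) (i1 : 'I_N) (r1 : nat).

Definition h1 (x : C0 N) : C0 N :=
  [ffun v => if v == gy i1 then drop_poly r1 (x (gx i1)) else 0].

(* C1 = F-span of all U^m w except U^{r1+n} x1 and U^n y1 *)
Definition inC1 : {pred C0 N} :=
  fun x => (x (gy i1) == 0) && (size (x (gx i1)) <= r1)%N.

Lemma inC1_zmod_closed : zmod_closed inC1.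
Proof.
split.
  by rewrite /inC1 /in_mem /= !ffunE eqxx size_poly0.
move=> x y; rewrite /inC1 /in_mem /= => /andP[/eqP hx sx] /andP[/eqP hy sy].
rewrite !ffunE hx hy subrr eqxx /=.
apply: leq_trans (size_polyD _ _) _.
by rewrite size_polyN geq_max sx sy.
Qed.

HB.instance Definition _ := GRing.isZmodClosed.Build (C0 N) inC1 inC1_zmod_closed.

Inductive C1 : predArgType := MkC1 (x : C0 N) of x \in inC1.
Definition c1val (c : C1) : C0 N := let: MkC1 x _ := c in x.
HB.instance Definition _ := [isSub of C1 for c1val].
HB.instance Definition _ := [Choice of C1 by <:].
HB.instance Definition _ := [SubChoice_isSubZmodule of C1 by <:].

Definition iota1 (c : C1) : C0 N := c1val c.

Definition pi0 (x : C0 N) : C0 N :=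
  [ffun v => if v == gy i1 then 0
             else if v == gx i1 then take_poly r1 (x v) else x v].

Lemma pi0_in (x : C0 N) : pi0 x \in inC1.
Proof.
rewrite /inC1 /in_mem /= !ffunE eqxx /=.
rewrite !eqxx /=; exact: size_take_poly.
Qed.

Definition pi1 (x : C0 N) : C1 := MkC1 (pi0_in x).

Variables (D : gen N -> gen N -> {poly 'F_2}) (Ag : gen N -> int).
Let d0 := dmat D.

Definition d1 (c : C1) : C1 := pi1 (d0 (iota1 c) + d0 (h1 (d0 (iota1 c)))).
Definition U1 (c : C1) : C1 := pi1 (Umul (iota1 c) + d0 (h1 (Umul (iota1 c)))).
Definition A1 (c : C1) : option int := Alex Ag (iota1 c).
Definition f1 (x : C0 N) : C1 := pi1 (x + d0 (h1 x)).
Definition g1 (c : C1) : C0 N := iota1 c + h1 (d0 (iota1 c)).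
End Cancel.

Arguments d1 {N} i1 r1 D c.
Arguments U1 {N} i1 r1 D c.
Arguments A1 {N} i1 r1 Ag c.
Arguments f1 {N} i1 r1 D x.
Arguments g1 {N} i1 r1 D c.

(* Main.v *)
Require Import Defs.
From HB Require Import structures.
From mathcomp Require Import all_boot all_order all_algebra.
From mathcomp Require Import zify.
Import Order.TTheory GRing.Theory Num.Theory.
Local Open Scope ring_scope.


Lemma ole_refl a : ole a a.
Proof. by case: a => //= x; exact: lexx. Qed.

Lemma ole_trans a b c : ole a b -> ole b c -> ole a c.
Proof. by case: a; case: b; case: c => //= x y z; apply: le_trans. Qed.
Arguments ole_trans {a b c}.

Lemma ole_omax a b c : ole (omax a b) c = ole a c && ole b c.
Proof.
case: a; case: b; case: c => //= *; first by rewrite ge_max.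
by rewrite andbT.
Qed.

Lemma ole_bigP (I : eqType) (r : seq I) (P : pred I) (F : I -> option int) b :
  ole (\big[omax/None]_(i <- r | P i) F i) b <->
  (forall i, i \in r -> P i -> ole (F i) b).
Proof.
elim: r => [|a r IH]; first by rewrite big_nil; split=> // _; case: b.
rewrite big_cons; case Pa: (P a).
  rewrite ole_omax; split.
    move=> /andP[Ha /IH Hr] i; rewrite inE => /orP[/eqP->//|]; exact: Hr.
  move=> H; rewrite H ?mem_head //=; apply/IH => i ir; apply: H.
  by rewrite inE ir orbT.
rewrite IH; split=> H i.
  rewrite inE => /orP[/eqP->|]; [by rewrite Pa| exact: H].
by move=> ir; apply: H; rewrite inE ir orbT.
Qed.

Section AlexS.
Variables (N : nat) (Ag : gen N -> int).

Lemma Alex_le (x : C0 N) b :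
  ole (Alex Ag x) b <->
  (forall w (m : nat), (x w)`_m != 0 -> ole (Some (Ag w - m%:Z)) b).
Proof.
rewrite /Alex ole_bigP; split.
  move=> H w m nz.
  have lt : (m < size (x w))%N.
    by rewrite ltnNge; apply/negP => le; move: nz; rewrite nth_default.
  have := H w (mem_index_enum _) isT.
  move/ole_bigP => /(_ (Ordinal lt) (mem_index_enum _) nz) //.
move=> H w _ _; apply/ole_bigP => i _ nz; exact: H.
Qed.

Lemma Alex_ge {x : C0 N} {w} {m : nat} :
  (x w)`_m != 0 -> ole (Some (Ag w - m%:Z)) (Alex Ag x).
Proof. by move: w m; apply/Alex_le; exact: ole_refl. Qed.

Lemma Alex_mono (x y : C0 N) :
  (forall w (m : nat), (y w)`_m != 0 ->
     exists w' (m' : nat), (x w')`_m' != 0 /\ Ag w - m%:Z <= Ag w' - m'%:Z) ->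
  ole (Alex Ag y) (Alex Ag x).
Proof.
move=> H; apply/Alex_le => w m nz; have [w' [m' [nz' le]]] := H w m nz.
exact: (@ole_trans (Some (Ag w - m%:Z)) (Some (Ag w' - m'%:Z)) _ le (Alex_ge nz')).
Qed.

Lemma Alex0 : Alex Ag (0 : C0 N) = None.
Proof.
have : ole (Alex Ag (0 : C0 N)) None.
  by apply/Alex_le => w m; rewrite ffunE coef0 eqxx.
by case: (Alex Ag 0).
Qed.

Lemma Alex_U (x : C0 N) : ole (Alex Ag (Umul x)) (Alex Ag x).
Proof.
apply: Alex_mono => w m; rewrite ffunE coefXM.
case: m => [|m] //= nz; exists w, m; split => //; lia.
Qed.
End AlexS.


Lemma addrr2 (p : {poly 'F_2}) : p + p = 0.
Proof.
apply/polyP => i; rewrite coefD coef0.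
by apply/val_inj; case: (p`_i) => [[|[|m]] Hm] //=.
Qed.

Section Main.
Variables (N : nat) (i1 : 'I_N) (r1 : nat) (D : gen N -> gen N -> {poly 'F_2})
  (Ag : gen N -> int).
Hypothesis dd : forall x : C0 N, dmat D (dmat D x) = 0.
Hypothesis DX : D (gy i1) (gx i1) = 'X^r1.
Hypothesis Agy : Ag (gy i1) = Ag (gx i1) - r1%:Z.

Local Notation d := (dmat D).
Local Notation h := (h1 i1 r1).
Local Notation p0 := (pi0 i1 r1).
Local Notation y1 := (gy i1).
Local Notation x1 := (gx i1).

Definition single (w : gen N) (p : {poly 'F_2}) : C0 N :=
  [ffun v => if v == w then p else 0].
Local Notation ys := (single y1).

Lemma addxx (x : C0 N) : x + x = 0.
Proof. by apply/ffunP => v; rewrite !ffunE addrr2. Qed.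

Lemma y1x1 : (y1 == x1) = false. Proof. by []. Qed.
Lemma x1y1 : (x1 == y1) = false. Proof. by []. Qed.

Lemma dD (x y : C0 N) : d (x + y) = d x + d y.
Proof. by apply/ffunP => v; rewrite !ffunE -big_split; apply: eq_bigr => w _; rewrite ffunE mulrDl. Qed.

Lemma d0 : d 0 = 0.
Proof. by apply/ffunP => v; rewrite !ffunE big1 // => w _; rewrite ffunE mul0r. Qed.

Lemma hD (x y : C0 N) : h (x + y) = h x + h y.
Proof. by apply/ffunP => v; rewrite !ffunE; case: ifP; rewrite ?addr0 // drop_polyD. Qed.

Lemma h0 : h 0 = 0.
Proof. by apply/ffunP => v; rewrite !ffunE; case: ifP; rewrite ?drop_poly0r. Qed.

Lemma p0D (x y : C0 N) : p0 (x + y) = p0 x + p0 y.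
Proof. by apply/ffunP => v; rewrite !ffunE; case: ifP; rewrite ?addr0 //; case: ifP; rewrite ?take_polyD. Qed.

Lemma p00 : p0 0 = 0.
Proof. by apply/ffunP => v; rewrite !ffunE; case: ifP => //; case: ifP; rewrite ?take_poly0r. Qed.

Lemma UD (x y : C0 N) : Umul (x + y) = Umul x + Umul y.
Proof. by apply/ffunP => v; rewrite !ffunE mulrDr. Qed.

Lemma U0 : Umul (0 : C0 N) = 0.
Proof. by apply/ffunP => v; rewrite !ffunE mulr0. Qed.

Lemma dU (x : C0 N) : d (Umul x) = Umul (d x).
Proof.
apply/ffunP => v; rewrite !ffunE mulr_sumr; apply: eq_bigr => w _.
by rewrite ffunE mulrA.
Qed.

Lemma d_single w p v : d (single w p) v = p * D w v.
Proof.
rewrite ffunE (bigD1 w) //= ffunE eqxx big1 ?addr0 // => u /negbTE ne.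
by rewrite ffunE ne mul0r.
Qed.

Lemma hE (x : C0 N) : h x = ys (drop_poly r1 (x x1)).
Proof. by []. Qed.

Lemma h_ys q : h (ys q) = 0.
Proof. by rewrite hE ffunE x1y1 drop_poly0r; apply/ffunP => v; rewrite !ffunE; case: ifP. Qed.

Lemma p0_ys q : p0 (ys q) = 0.
Proof.
apply/ffunP => v; rewrite !ffunE; case: ifP => // /negbT ny.
by case: ifP; rewrite ?(negbTE ny) ?take_poly0r.
Qed.

Lemma hd_ys q : h (d (ys q)) = ys q.
Proof. by rewrite hE d_single DX drop_polyMXn_id. Qed.

Lemma hh (x : C0 N) : h (h x) = 0.
Proof. by rewrite [h x]hE h_ys. Qed.

Lemma hdh (x : C0 N) : h (d (h x)) = h x.
Proof. by rewrite [h x]hE hd_ys. Qed.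

Lemma U_ys q : Umul (ys q) = ys ('X * q).
Proof. by apply/ffunP => v; rewrite !ffunE; case: ifP; rewrite ?mulr0. Qed.

Lemma lowK (x : C0 N) : drop_poly r1 ((x + d (h x)) x1) = 0.
Proof. by rewrite ffunE hE d_single DX drop_polyD drop_polyMXn_id addrr2. Qed.

Lemma p0_low (x : C0 N) : drop_poly r1 (x x1) = 0 -> p0 x = x + ys (x y1).
Proof.
move=> hx; apply/ffunP => v; rewrite !ffunE.
case: (v =P y1) => [->|/eqP ny]; first by rewrite addrr2.
rewrite addr0; case: ifP => // /eqP ->.
by rewrite -[in RHS](poly_take_drop r1 (x x1)) hx mul0r addr0.
Qed.

Definition f0 (x : C0 N) := p0 (x + d (h x)).

Lemma f0D (x y : C0 N) : f0 (x + y) = f0 x + f0 y.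
Proof. by rewrite /f0 hD dD -p0D addrACA. Qed.

Lemma f00 : f0 0 = 0.
Proof. by rewrite /f0 h0 d0 addr0 p00. Qed.

Lemma f0_ys q : f0 (ys q) = 0.
Proof. by rewrite /f0 h_ys d0 addr0 p0_ys. Qed.

Lemma f0_dys q : f0 (d (ys q)) = 0.
Proof. by rewrite /f0 hd_ys addxx p00. Qed.

Lemma f0_dh (x : C0 N) : f0 (d (h x)) = 0.
Proof. by rewrite hE f0_dys. Qed.

Lemma f0_h (x : C0 N) : f0 (h x) = 0.
Proof. by rewrite hE f0_ys. Qed.

Lemma f0E (x : C0 N) : f0 x = x + d (h x) + ys ((x + d (h x)) y1).
Proof. by rewrite /f0 p0_low // lowK. Qed.

Lemma hdd (x : C0 N) : h (d (d x)) = 0.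
Proof. by rewrite dd h0. Qed.

Lemma gf0 (x : C0 N) : f0 x + h (d (f0 x)) = x + d (h x) + h (d x).
Proof.
by rewrite f0E !dD !hD hd_ys hdd addr0 addrACA addxx addr0.
Qed.


Local Notation C1' := (C1 i1 r1).

Lemma inC1P (c : C1') : h (val c) = 0 /\ p0 (val c) = val c.
Proof.
have := valP c; rewrite /inC1 /in_mem /= => /andP[/eqP hy hs].
split; first by apply/ffunP => v; rewrite !ffunE drop_poly_eq0 //; case: ifP.
apply/ffunP => v; rewrite !ffunE; case: (v =P y1) => [->|_]; first by rewrite hy.
by case: (v =P x1) => [->|_]; rewrite ?take_poly_id.
Qed.

Lemma f1_val x : val (f1 i1 r1 D x) = f0 x. Proof. by []. Qed.
Lemma g1E c : g1 i1 r1 D c = val c + h (d (val c)). Proof. by []. Qed.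
Lemma d1E c : val (d1 i1 r1 D c) = f0 (d (val c)). Proof. by []. Qed.
Lemma U1E c : val (U1 i1 r1 D c) = f0 (Umul (val c)). Proof. by []. Qed.

Lemma f0_val (c : C1') : f0 (val c) = val c.
Proof. by have [H1 H2] := inC1P c; rewrite /f0 H1 d0 addr0. Qed.

Lemma P1 c : f1 i1 r1 D (g1 i1 r1 D c) = c.
Proof. by apply/val_inj; rewrite f1_val g1E f0D f0_h addr0 f0_val. Qed.

Lemma P2 x : g1 i1 r1 D (f1 i1 r1 D x) = x + d (h x) + h (d x).
Proof. by rewrite g1E f1_val gf0. Qed.

Lemma f0d_f0 x : f0 (d (f0 x)) = f0 (d x).
Proof. by rewrite [f0 x]f0E !dD dd addr0 f0D f0_dys addr0. Qed.

Lemma f0U_f0 x : f0 (Umul (f0 x)) = f0 (Umul x).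
Proof.
rewrite [f0 x]f0E !UD !f0D U_ys f0_ys addr0 -dU [h x]hE U_ys f0_dys.
by rewrite addr0.
Qed.

Lemma P3 x : f1 i1 r1 D (d x) = d1 i1 r1 D (f1 i1 r1 D x).
Proof. by apply/val_inj; rewrite d1E f1_val f0d_f0. Qed.

Lemma P4 c : g1 i1 r1 D (d1 i1 r1 D c) = d (g1 i1 r1 D c).
Proof.
rewrite g1E d1E f0E !dD !dd !hD hd_ys h0 !add0r -addrA addxx addr0.
by [].
Qed.

Lemma d1_fdg c : d1 i1 r1 D c = f1 i1 r1 D (d (g1 i1 r1 D c)).
Proof. by apply/val_inj; rewrite d1E f1_val g1E dD f0D f0_dh addr0. Qed.

Lemma d1d1 c : d1 i1 r1 D (d1 i1 r1 D c) = 0.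
Proof. by apply/val_inj; rewrite d1_fdg P4 f1_val dd f00 GRing.val0. Qed.

Lemma U1d1 c : U1 i1 r1 D (d1 i1 r1 D c) = d1 i1 r1 D (U1 i1 r1 D c).
Proof. by apply/val_inj; rewrite U1E !d1E U1E f0U_f0 f0d_f0 dU. Qed.

Lemma Hom1 x : f1 i1 r1 D (Umul x) =
  U1 i1 r1 D (f1 i1 r1 D x) + d1 i1 r1 D 0 + 0.
Proof.
apply/val_inj; rewrite !GRing.valD U1E d1E f1_val f0U_f0 GRing.val0.
by rewrite d0 f00 !addr0.
Qed.

Lemma Hom2 c : g1 i1 r1 D (U1 i1 r1 D c) =
  Umul (g1 i1 r1 D c) + d (h (Umul (g1 i1 r1 D c)))
  + h (Umul (g1 i1 r1 D (d1 i1 r1 D c))).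
Proof.
rewrite P4 [g1 _ _ _ (U1 _ _ _ c)]g1E U1E gf0 g1E !UD !hD !dD.
rewrite UD hD -!dU [h (d (val c))]hE U_ys h_ys hd_ys d0 addr0.
rewrite -!addrA; congr (_ + _); rewrite [RHS]addrCA; congr (_ + _).
by rewrite addrCA addxx addr0.
Qed.


Hypothesis filt : is_filtration d (Alex Ag).
Local Notation A := (Alex Ag).

Lemma A_add x y b : ole (A x) b -> ole (A y) b -> ole (A (x + y)) b.
Proof.
move=> hx hy; have [H _ _] := filt; apply: ole_trans (H x y) _.
by rewrite ole_omax hx hy.
Qed.

Lemma A_d x : ole (A (d x)) (A x).
Proof. by have [_ H _] := filt. Qed.

Lemma A_h x : ole (A (h x)) (A x).
Proof.
apply: Alex_mono => w m; rewrite hE ffunE.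
case: (w =P y1) => [->|_]; last by rewrite coef0 eqxx.
rewrite coef_drop_poly => nz; exists x1, (m + r1)%N; split => //.
rewrite Agy; lia.
Qed.

Lemma A_p0 x : ole (A (p0 x)) (A x).
Proof.
apply: Alex_mono => w m; rewrite ffunE.
case: ifP => _; first by rewrite coef0 eqxx.
case: ifP => _; last by move=> nz; exists w, m; split => //; lia.
rewrite coef_take_poly; case: ifP => _; last by rewrite eqxx.
by move=> nz; exists w, m; split => //; lia.
Qed.

Lemma A_f0 x : ole (A (f0 x)) (A x).
Proof.
apply: ole_trans (A_p0 _) _; apply: A_add; first exact: ole_refl.
exact: ole_trans (A_d _) (A_h _).
Qed.

Lemma A_g0 x : ole (A (x + h (d x))) (A x).
Proof.
apply: A_add; first exact: ole_refl.
exact: ole_trans (A_h _) (A_d _).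
Qed.

Lemma g1D c c' : g1 i1 r1 D (c + c') = g1 i1 r1 D c + g1 i1 r1 D c'.
Proof. by rewrite !g1E GRing.valD dD hD addrACA. Qed.

Lemma val_eq0 (c : C1') : val c = 0 <-> c = 0.
Proof. by split => [H|->]; [apply/val_inj; rewrite H GRing.val0 | exact: GRing.val0]. Qed.

Lemma main :
  ZU_deformation_retract
    (dmat D) Umul (Alex Ag)
    (d1 i1 r1 D) (U1 i1 r1 D) (A1 i1 r1 Ag)
    (f1 i1 r1 D) (g1 i1 r1 D).
Proof.
have [Fadd Fd F0] := filt.
split.
  split => //; first exact: dD.
  by split => //; [exact: UD | exact: Alex_U | move=> x; rewrite dU].
split.
  split.
  - by move=> c c'; apply/val_inj; rewrite GRing.valD !d1E GRing.valD dD f0D.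
  - exact: d1d1.
  - split.
    + by move=> c c'; rewrite /A1 /iota1 -[c1val _]/(val _) GRing.valD; apply: Fadd.
    + move=> c; rewrite /A1 /iota1 -![c1val _]/(val _) d1E.
      exact: ole_trans (A_f0 _) (A_d _).
    + by move=> c; rewrite /A1 /iota1 -[c1val _]/(val _) F0 val_eq0.
  - split.
    + by move=> c c'; apply/val_inj; rewrite GRing.valD !U1E GRing.valD UD f0D.
    + move=> c; rewrite /A1 /iota1 -![c1val _]/(val _) U1E.
      exact: ole_trans (A_f0 _) (@Alex_U _ Ag _).
    + exact: U1d1.
split.
  split.
  - by move=> x y; apply/val_inj; rewrite GRing.valD !f1_val f0D.
  - by move=> x; rewrite /A1 /iota1 -[c1val _]/(val _) f1_val; exact: A_f0.
  - exact: P3.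
split.
  split.
  - exact: g1D.
  - by move=> c; rewrite g1E /A1 /iota1; exact: A_g0.
  - exact: P4.
split; first exact: P1.
split.
  exists h; split.
  - exact: hD.
  - exact: A_h.
  - exact: P2.
split.
  exists (fun _ => 0); split; last exact: Hom1.
    by move=> x y; rewrite addr0.
  by move=> x; rewrite /A1 /iota1 -[c1val _]/(val _) GRing.val0 Alex0.
exists (fun c => h (Umul (g1 i1 r1 D c))); split.
- by move=> c c'; rewrite g1D UD hD.
- move=> c; apply: ole_trans (A_h _) _; apply: ole_trans (@Alex_U _ Ag _) _.
  by rewrite g1E /A1 /iota1; exact: A_g0.
- exact: Hom2.
Qed.

End Main.

Lemma sum_ord_pick (R : nmodType) n (c : pred nat) (k : nat) (a : nat -> R) :
  \sum_(m < n | c m && (m == k :> nat)) a m = if (k < n)%N && c k then a k else 0.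
Proof.
case: ifP => [/andP[lt ck] | H].
  rewrite (bigD1 (Ordinal lt)) /= ?ck ?eqxx // big1 ?addr0 // => j /andP[/andP[_ /eqP jk] ne].
  by exfalso; move: ne; rewrite -(inj_eq val_inj) /= jk eqxx.
rewrite big1 // => j /andP[cj /eqP jk]; exfalso; move: H.
by rewrite -jk (ltn_ord j) cj.
Qed.

Lemma extract N (D : gen N -> gen N -> {poly 'F_2}) (Ag Mg : gen N -> int)
  (r : 'I_N -> nat) (i : 'I_N) :
  d_lowers_maslov D Mg -> horizontally_simplified D Ag r ->
  D (gy i) (gx i) = 'X^(r i) /\ Ag (gy i) = Ag (gx i) - (r i)%:Z.
Proof.
move=> hm [Hy _ _]; have [_ E] := Hy i.
have PE : dmat D (genel (gy i)) (gx i) = D (gy i) (gx i).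
  by rewrite d_single mul1r.
have := congr1 (fun F : C0 N => (F (gx i))`_(r i)) E; move=> /=.
rewrite ffunE PE !ffunE eqxx mulr1 coefXn eqxx coef_sumMXn.
rewrite (sum_ord_pick _ _ (fun m : nat => Ag (gx i) - m%:Z == Ag (gy i))).
case: ifP => [/andP[lt /eqP ag] P1 | _ /eqP]; last by rewrite eq_sym oner_eq0.
split; last by rewrite -ag; lia.
apply/polyP => j; rewrite coefXn.
case: (j =P r i) => [->|ne]; first by rewrite P1.
apply/eqP; apply: contraT => nz.
have h1 := hm (gy i) (gx i) j nz.
have h2 := hm (gy i) (gx i) (r i); rewrite P1 in h2; have {h2} h2 := h2 isT.
exfalso; apply: ne; lia.
Qed.

Theorem lemma3p1 (N : nat) (D : gen N -> gen N -> {poly 'F_2})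
  (Ag Mg : gen N -> int) (r : 'I_N -> nat) (i1 : 'I_N) :
  (forall x : C0 N, dmat D (dmat D x) = 0) ->
  is_filtration (dmat D) (Alex Ag) ->
  d_lowers_maslov D Mg ->
  horizontally_simplified D Ag r ->
  ZU_deformation_retract
    (dmat D) Umul (Alex Ag)
    (d1 i1 (r i1) D) (U1 i1 (r i1) D) (A1 i1 (r i1) Ag)
    (f1 i1 (r i1) D) (g1 i1 (r i1) D).
Proof.
move=> dd filt hm hs; have [DX Agy] := @extract N D Ag Mg r i1 hm hs.
exact: main.
Qed.
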